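(* Let $n\ge1$, $\varepsilon\in D$, $s\in D^n$, and let $\mu^{(n)}$, $e_n$ and $n'$ be as in the recursive construction below. If $g\in D[x]$ is zero or satisfies $\deg g\le -e_n$, then $\mu^{(n)}+g\,\mu^{(n')}\in\mathrm{Min}(s)$. In particular, if $e_n\le 0$ then $s$ has more than one minimal polynomial, i.e. $|\mathrm{Min}(s)|>1$.
   Context: Let $D$ be a commutative integral domain with $1\neq 0$. For $s=(s_1,\dots,s_n)\in D^n$ put $\underline{s}=s_1x^{-1}+\cdots+s_nx^{-n}\in D[x,x^{-1}]$; for a Laurent polynomial $F$, $F_k$ is the coefficient of $x^k$; $s^{(i)}=(s_1,\dots,s_i)$. A polynomial $f\in D[x]$ is an annihilator of $s$ if $f=0$, or $d=\deg f\ge0$ and $(f\cdot\underline{s})_{d-j}=0$ for $d+1\le j\le n$. $\mathrm{Min}(s)$ is the set of nonzero annihilators of least degree. For nonzero $f\in D[x]$ and $t\in D^m$, $\Delta(f,t)=(f\cdot\underline{t})_{\deg f-m}$. Recursive construction (relative to a fixed $\varepsilon\in D$): put $\mu^{(-1)}=\varepsilon$, $\mu^{(0)}=1$, $\Delta_0=1$, $0'=-1$, and for $j\ge 0$ let $e_j=j+1-2\deg\mu^{(j)}$ (so $e_0=1$). For $j=1,\dots,n$ successively define: $\Delta_j=\Delta(\mu^{(j-1)},s^{(j)})$; the index $j'=(j-1)'$ if $\Delta_j=0$ or $e_{j-1}\le 0$, and $j'=j-1$ if $\Delta_j\neq0$ and $e_{j-1}>0$; $\Delta'_j=\Delta_{(j-1)'+1}$;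 and $\mu^{(j)}=\mu^{(j-1)}$ if $\Delta_j=0$, otherwise $\mu^{(j)}=\Delta'_j\,x^{\max\{e_{j-1},0\}}\mu^{(j-1)}-\Delta_j\,x^{\max\{-e_{j-1},0\}}\mu^{((j-1)')}$. *)

(* Defs.v *)
From HB Require Import structures.
From mathcomp Require Import all_boot all_order all_algebra.
Set Implicit Arguments. Unset Strict Implicit. Unset Printing Implicit Defensive.
Import Order.TTheory GRing.Theory Num.Theory.
Local Open Scope ring_scope.

Section BM.
Variable D : idomainType.

(* A sequence s = (s_1,...,s_n) in D^n is represented by s : seq D with
   s`_(i-1) = s_i. *)

(* degree of a polynomial (only used for nonzero polynomials; deg 0 = 0) *)
Definition pdeg (f : {poly D}) : nat := (size f).-1.

(* coefficient of x^k (k : int) in the Laurent polynomial f * s_underline,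
   where s_underline = s_1 x^-1 + ... + s_n x^-n.
   (f * s)_k = \sum_{i=1}^n f_{k+i} s_i, with f_m = 0 for m < 0. *)
Definition lcoef (f : {poly D}) (s : seq D) (k : int) : D :=
  \sum_(i < size s)
     (if (0 <= k + (i.+1)%:Z)%R then f`_(absz (k + (i.+1)%:Z)) else 0) * s`_i.

Definition annihilator (s : seq D) (f : {poly D}) : Prop :=
  f = 0 \/
  (forall j : nat, (pdeg f < j)%N -> (j <= size s)%N ->
     lcoef f s ((pdeg f)%:Z - j%:Z) = 0).

Definition in_Min (s : seq D) (f : {poly D}) : Prop :=
  f != 0 /\ annihilator s f /\
  (forall g : {poly D}, g != 0 -> annihilator s g -> (pdeg f <= pdeg g)%N).

Definition Delta (f : {poly D}) (t : seq D) : D :=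
  lcoef f t ((pdeg f)%:Z - (size t)%:Z).

(* State of the recursive construction after step j:
   mu = mu^(j), mup = mu^(j'), jp = j', dp = Delta_{j'+1}. *)
Record bmstate := BMState {
  st_mu : {poly D};
  st_mup : {poly D};
  st_jp : int;
  st_dp : D }.

Definition e_of (j : nat) (mu : {poly D}) : int :=
  j%:Z + 1 - 2%:Z * (pdeg mu)%:Z.

Definition bmstep (s : seq D) (j : nat) (st : bmstate) : bmstate :=
  let mu := st_mu st in
  let Dj := Delta mu (take j s) in
  let e := e_of j.-1 mu in
  if Dj == 0 then st
  else if (0 < e)%R then
    BMState (st_dp st *: ('X^(absz e) * mu) - Dj *: st_mup st)
            mu (j.-1)%:Z Dj
  else
    BMState (st_dp st *: mu - Dj *: ('X^(absz e) * st_mup st))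
            (st_mup st) (st_jp st) (st_dp st).

(* state after step j; initial: mu^(0) = 1, 0' = -1, mu^(-1) = eps,
   Delta_{0'+1} = Delta_0 = 1 *)
Fixpoint bmstate_at (eps : D) (s : seq D) (j : nat) : bmstate :=
  match j with
  | 0 => BMState 1 eps%:P (-1) 1
  | j'.+1 => bmstep s j'.+1 (bmstate_at eps s j')
  end.

Definition mu (eps : D) (s : seq D) (j : nat) : {poly D} :=
  st_mu (bmstate_at eps s j).
Definition mu_prime (eps : D) (s : seq D) (j : nat) : {poly D} :=
  st_mup (bmstate_at eps s j).
Definition e (eps : D) (s : seq D) (j : nat) : int :=
  e_of j (mu eps s j).

End BM.

(* Main.v *)
Require Import Defs.
From HB Require Import structures.
From mathcomp Require Import all_boot all_order all_algebra.
Import Order.TTheory GRing.Theory Num.Theory.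
Local Open Scope ring_scope.
From Stdlib Require Import Lia.
Set Implicit Arguments. Unset Strict Implicit. Unset Printing Implicit Defensive.

Ltac tonat := repeat match goal with
  | H : is_true (leq _ _) |- _ => move/ssrnat.leP: H => H
  | H : is_true (~~ leq _ _) |- _ => move: H; rewrite -ltnNge => /ssrnat.leP H
  | H : (leq _ _) = false |- _ => move/negbT: H; rewrite -ltnNge => /ssrnat.leP H
  | H : (leq _ _) = true |- _ => move/ssrnat.leP: H => H
  end.
Ltac nopred := repeat match goal with
  | H : context [predn ?x] |- _ => rewrite -(subn1 x) in H
  | |- context [predn ?x] => rewrite -(subn1 x)
  end.
Ltac nlia := nopred; tonat; unfold addn, subn, muln in *;
  first [ lia | apply/ssrnat.leP; lia | apply/negP/ssrnat.leP; lia | apply/eqP; lia ].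

Lemma lcoef_nat (D : idomainType) (f : {poly D}) (t : seq D) (d i : nat) :
  lcoef f t (d%:Z - i%:Z) = \sum_(i' < size t)
    (if (i <= d + i'.+1)%N then f`_(d + i'.+1 - i) else 0) * t`_i'.
Proof.
rewrite /lcoef; apply: eq_bigr => i' _.
have -> : d%:Z - i%:Z + (i'.+1)%:Z = (d + i'.+1)%:Z - i%:Z.
  by rewrite PoszD addrAC.
by rewrite subr_ge0 lez_nat; case: ifP => // h; rewrite distnEl.
Qed.

Definition Sp (D : idomainType) (s : seq D) : {poly D} :=
  \sum_(i < size s) s`_i *: 'X^((size s).-1 - i).
Definition Cf (D : idomainType) (s : seq D) (f : {poly D}) (m : nat) : D :=
  (f * Sp s)`_m.

Lemma Cf_sum (D : idomainType) (s : seq D) (f : {poly D}) (d i : nat) :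
  (i <= size s)%N ->
  \sum_(i' < size s) (if (i <= d + i'.+1)%N then f`_(d + i'.+1 - i) else 0) * s`_i'
  = Cf s f (d + size s - i).
Proof.
move=> hi; rewrite /Cf /Sp mulr_sumr coef_sum; apply: eq_bigr => i' _.
rewrite -scalerAr coefZ coefMXn mulrC.
have hi' := ltn_ord i'.
case: ifP => h1; case: ifP => h2.
- exfalso; nlia.
- by have -> : (d + size s - i - ((size s).-1 - i') = d + i'.+1 - i)%N by nlia.
- by rewrite mulr0.
- exfalso; nlia.
Qed.

Lemma size_pdeg (D : idomainType) (p : {poly D}) : p != 0 -> size p = (pdeg p).+1.
Proof. by move=> h; rewrite /pdeg prednK // size_poly_gt0. Qed.

Lemma size_pdeg_le (D : idomainType) (p : {poly D}) : (size p <= (pdeg p).+1)%N.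
Proof. exact: leqSpred. Qed.

Lemma coef_pdeg (D : idomainType) (p : {poly D}) i : (pdeg p < i)%N -> p`_i = 0.
Proof. by move=> h; apply: nth_default; apply: leq_trans (size_pdeg_le p) _. Qed.

Lemma Delta_eq (D : idomainType) (s : seq D) (f : {poly D}) (j : nat) :
  (j <= size s)%N -> Delta f (take j s) = Cf s f (pdeg f + size s - j).
Proof.
move=> hj; rewrite /Delta size_takel // lcoef_nat -Cf_sum //.
rewrite size_takel //.
rewrite (big_ord_widen (size s)
  (fun i' : nat => (if (j <= pdeg f + i'.+1)%N then f`_(pdeg f + i'.+1 - j) else 0)
     * (take j s)`_i') hj) big_mkcond /=.
apply: eq_bigr => i' _; case: ifP => h.
  by rewrite nth_take.
rewrite ifT; last nlia.
by rewrite coef_pdeg ?mul0r //; nlia.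
Qed.

Definition W (D : idomainType) (s : seq D) (f : {poly D}) (j : nat) : Prop :=
  forall m, (pdeg f + size s - j <= m)%N -> (m < size s)%N -> Cf s f m = 0.

Lemma W_mono (D : idomainType) (s : seq D) (f : {poly D}) (j k : nat) :
  (k <= j)%N -> W s f j -> W s f k.
Proof. move=> hk hW m h1 h2; apply: hW => //; nlia. Qed.

Lemma Cf_sub (D : idomainType) (s : seq D) (p q : {poly D}) m :
  Cf s (p - q) m = Cf s p m - Cf s q m.
Proof. by rewrite /Cf mulrBl coefB. Qed.
Lemma Cf_add (D : idomainType) (s : seq D) (p q : {poly D}) m :
  Cf s (p + q) m = Cf s p m + Cf s q m.
Proof. by rewrite /Cf mulrDl coefD. Qed.
Lemma Cf_scale (D : idomainType) (s : seq D) c (p : {poly D}) m :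
  Cf s (c *: p) m = c * Cf s p m.
Proof. by rewrite /Cf -scalerAl coefZ. Qed.
Lemma Cf_Xn (D : idomainType) (s : seq D) k (p : {poly D}) m :
  Cf s ('X^k * p) m = if (m < k)%N then 0 else Cf s p (m - k).
Proof. by rewrite /Cf -mulrA coefXnM. Qed.

Lemma Cf_mul (D : idomainType) (s : seq D) (g p : {poly D}) m :
  Cf s (g * p) m = \sum_(c < m.+1) g`_c * Cf s p (m - c).
Proof. by rewrite /Cf -mulrA coefM. Qed.

Lemma massey (D : idomainType) (s : seq D) (f g : {poly D}) (j : nat) :
  (j <= size s)%N -> W s f j.-1 -> Cf s f (pdeg f + size s - j) != 0 ->
  g != 0 -> W s g j -> (j <= pdeg f + pdeg g)%N.
Proof.
move=> hj Wf hD hg Wg; rewrite leqNgt; apply/negP => hlt.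
have [M hM] : {M : nat | M = (pdeg f + pdeg g + size s - j)%N} by exists (pdeg f + pdeg g + size s - j)%N.
have hb : (pdeg g < M.+1)%N by nlia.
have E1 : Cf s (g * f) M = g`_(pdeg g) * Cf s f (pdeg f + size s - j).
  rewrite Cf_mul (bigD1 (Ordinal hb)) //= big1 ?addr0.
    by congr (_ * Cf _ _ _); nlia.
  move=> c hc; have hcb : (c : nat) != pdeg g.
    by apply: contra hc => /eqP h; apply/eqP/val_inj.
  case: (ltngtP c (pdeg g)) => hcg.
  - rewrite Wf ?mulr0 //; nlia.
  - by rewrite coef_pdeg ?mul0r //; nlia.
  - by rewrite hcg eqxx in hcb.
have E2 : Cf s (f * g) M = 0.
  rewrite Cf_mul big1 // => c _; case: (leqP c (pdeg f)) => hcf.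
  - by rewrite Wg ?mulr0 //; nlia.
  - by rewrite coef_pdeg ?mul0r //; nlia.
move: E1; rewrite mulrC E2 => /esym /eqP; rewrite mulf_eq0 (negbTE hD) orbF.
have : lead_coef g != 0 by rewrite lead_coef_eq0.
by rewrite lead_coefE => /negbTE ->.
Qed.

Lemma pdeg_sub (D : idomainType) (p q : {poly D}) :
  p != 0 -> (size q <= pdeg p)%N -> p - q != 0 /\ pdeg (p - q) = pdeg p.
Proof.
move=> hp hq.
have hs : size (p - q) = size p by rewrite size_polyDl // size_polyN size_pdeg.
split; last by rewrite /pdeg hs.
by rewrite -size_poly_eq0 hs size_poly_eq0.
Qed.

Lemma pdeg_scale (D : idomainType) (a : D) (p : {poly D}) :
  a != 0 -> pdeg (a *: p) = pdeg p.
Proof. by move=> ha; rewrite /pdeg size_scale. Qed.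

Lemma scale_neq0 (D : idomainType) (a : D) (p : {poly D}) :
  a != 0 -> p != 0 -> a *: p != 0.
Proof. by move=> ha hp; rewrite scale_poly_eq0 negb_or ha. Qed.

Lemma pdeg_Xn (D : idomainType) k (p : {poly D}) :
  p != 0 -> 'X^k * p != 0 /\ pdeg ('X^k * p) = (k + pdeg p)%N.
Proof.
move=> hp; have hs : size ('X^k * p) = (k + size p)%N by rewrite mulrC size_mulXn.
split; first by rewrite -size_poly_eq0 hs addn_eq0 size_poly_eq0 (negbTE hp) andbF.
by rewrite /pdeg hs size_pdeg //= addnS.
Qed.

Lemma size_sc_le (D : idomainType) c (q : {poly D}) : (size (c *: q) <= (pdeg q).+1)%N.
Proof. exact: leq_trans (size_scale_leq _ _) (size_pdeg_le _). Qed.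

Lemma size_scX_le (D : idomainType) c k (q : {poly D}) :
  (size (c *: ('X^k * q)) <= k + (pdeg q).+1)%N.
Proof.
apply: leq_trans (size_scale_leq _ _) _.
apply: leq_trans (size_polyMleq _ _) _.
rewrite size_polyXn addSn /=; rewrite leq_add2l; exact: size_pdeg_le.
Qed.

Record Inv (D : idomainType) (s : seq D) (j : nat) (st : bmstate D) : Prop := {
  inv_nz : st_mu st != 0;
  inv_W : W s (st_mu st) j;
  inv_dp : st_dp st != 0;
  inv_deg : (pdeg (st_mup st) + pdeg (st_mu st) <= j)%N;
  inv_mp0 : forall m, (size s - pdeg (st_mu st) < m)%N -> (m < size s)%N ->
              Cf s (st_mup st) m = 0;
  inv_mp1 : (0 < pdeg (st_mu st))%N ->
              Cf s (st_mup st) (size s - pdeg (st_mu st)) = st_dp st;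
  inv_min : forall g, g != 0 -> W s g j -> (pdeg (st_mu st) <= pdeg g)%N }.

Lemma Inv0 (D : idomainType) (s : seq D) (eps : D) :
  Inv s 0 (BMState 1 eps%:P (-1) 1).
Proof.
have p1 : pdeg (1 : {poly D}) = 0%N by rewrite /pdeg size_poly1.
have pe : pdeg (eps%:P) = 0%N.
  by rewrite /pdeg size_polyC; case: (eps != 0).
split => /=; rewrite ?p1 ?pe //.
- by rewrite oner_neq0.
- by move=> m; rewrite p1 => h1 h2; exfalso; nlia.
- by rewrite oner_neq0.
- by move=> m h1 h2; exfalso; nlia.
Qed.

Lemma e_ofE (D : idomainType) (j : nat) (p : {poly D}) :
  e_of j p = (j.+1)%:Z - (2 * pdeg p)%N%:Z.
Proof. by rewrite /e_of PoszM; congr (_ - _); rewrite -addn1 PoszD. Qed.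

Lemma Inv_step (D : idomainType) (s : seq D) (j : nat) (st : bmstate D) :
  (j < size s)%N -> Inv s j st -> Inv s j.+1 (bmstep s j.+1 st).
Proof.
move=> hj [hmu Wmu hdp hdeg hmp0 hmp1 hmin].
rewrite /bmstep Delta_eq // /= e_ofE.
move: hmu Wmu hdeg hmp0 hmp1 hmin.
case: st hdp => mu mp jp dp /= hdp hmu Wmu hdeg hmp0 hmp1 hmin.
set L := pdeg mu in Wmu hdeg hmp0 hmp1 hmin *.
set Dj := Cf s mu (L + size s - j.+1).
have hDj : Cf s mu (L + size s - j.+1) = Dj by [].
case: (eqVneq Dj 0) => hD0.
  split => //=.
  - move=> m h1 h2; case: (ltngtP m (L + size s - j.+1)) => hm.
    + exfalso; nlia.
    + by apply: Wmu => //; nlia.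
    + by rewrite hm hDj hD0.
  - nlia.
  - by move=> g hg Wg; apply: hmin => //; apply: W_mono Wg.
case: (ltnP (2 * L) j.+1) => hlt.
  rewrite subr_gt0 ltz_nat hlt distnEl; last exact: ltnW.
  set k := (j.+1 - 2 * L)%N.
  have [hX hXd] := pdeg_Xn k hmu.
  have hA : dp *: ('X^k * mu) != 0 by apply: scale_neq0.
  have [hnz hdeg'] : dp *: ('X^k * mu) - Dj *: mp != 0 /\
     pdeg (dp *: ('X^k * mu) - Dj *: mp) = pdeg (dp *: ('X^k * mu)).
    apply: pdeg_sub => //; apply: leq_trans (size_sc_le _ _) _.
    rewrite pdeg_scale // hXd -/L; nlia.
  rewrite pdeg_scale // hXd -/L in hdeg'.
  have hL' : (k + L = j.+1 - L)%N by nlia.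
  rewrite hL' in hdeg'.
  split => //=; rewrite ?hdeg'.
  - move=> m h1 h2; rewrite Cf_sub !Cf_scale Cf_Xn ifF; last nlia.
    case: (ltngtP m (size s - L)) => hm.
    + exfalso; nlia.
    + rewrite Wmu; [|nlia|nlia]; rewrite hmp0 //.
      by rewrite !mulr0 subrr.
    + have hL0 : (0 < L)%N by nlia.
      rewrite hm hmp1 //.
      have -> : (size s - L - k = L + size s - j.+1)%N by nlia.
      by rewrite hDj mulrC subrr.
  - nlia.
  - move=> m h1 h2; apply: Wmu => //; nlia.
  - move=> h0; have -> : (size s - (j.+1 - L) = L + size s - j.+1)%N by nlia.
    by [].
  - move=> g hg Wg.
    have := massey (f := mu) (g := g) (j := j.+1) hj Wmu; rewrite -/L hDj => /(_ hD0 hg Wg) ?.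
    nlia.
rewrite subr_gt0 ltz_nat ltnNge hlt /= distnEr; last exact: hlt.
set k := (2 * L - j.+1)%N.
have hA : dp *: mu != 0 by apply: scale_neq0.
have [hnz hdeg'] : dp *: mu - Dj *: ('X^k * mp) != 0 /\
   pdeg (dp *: mu - Dj *: ('X^k * mp)) = pdeg (dp *: mu).
  apply: pdeg_sub => //; apply: leq_trans (size_scX_le _ _ _) _.
  rewrite pdeg_scale // -/L; nlia.
rewrite pdeg_scale // -/L in hdeg'.
split => //=; rewrite ?hdeg' //.
- move=> m h1 h2; rewrite Cf_sub !Cf_scale Cf_Xn ifF; last nlia.
  case: (ltngtP m (L + size s - j.+1)) => hm.
  + exfalso; nlia.
  + rewrite Wmu; [|nlia|nlia]; rewrite hmp0; [|nlia|nlia].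
    by rewrite !mulr0 subrr.
  + have hL0 : (0 < L)%N by nlia.
    have -> : (m - k = size s - L)%N by nlia.
    by rewrite hmp1 // hm hDj mulrC subrr.
- nlia.
- by move=> g hg Wg; apply: hmin => //; apply: W_mono Wg.
Qed.

Lemma Inv_at (D : idomainType) (eps : D) (s : seq D) (j : nat) :
  (j <= size s)%N -> Inv s j (bmstate_at eps s j).
Proof.
elim: j => [|j IH] hj /=; first exact: Inv0.
by apply: Inv_step => //; apply: IH; apply: ltnW.
Qed.

Lemma ann_of_W (D : idomainType) (s : seq D) (f : {poly D}) :
  W s f (size s) -> annihilator s f.
Proof.
move=> hW; right => j h1 h2.
rewrite lcoef_nat Cf_sum //; apply: hW; nlia.
Qed.

Lemma W_of_ann (D : idomainType) (s : seq D) (f : {poly D}) :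
  f != 0 -> annihilator s f -> W s f (size s).
Proof.
move=> hf [h0|h]; first by rewrite h0 eqxx in hf.
move=> m h1 h2.
have := h (pdeg f + size s - m)%N; rewrite lcoef_nat Cf_sum; last nlia.
have -> : (pdeg f + size s - (pdeg f + size s - m) = m)%N by nlia.
by apply; nlia.
Qed.

Theorem mainTheorem7 (D : idomainType) (n : nat) (eps : D) (s : seq D) :
  (1 <= n)%N -> size s = n ->
  (forall g : {poly D}, (g = 0 \/ ((pdeg g)%:Z <= - e eps s n)) ->
     in_Min s (mu eps s n + g * mu_prime eps s n)) /\
  (e eps s n <= 0 ->
     exists f1 f2 : {poly D}, in_Min s f1 /\ in_Min s f2 /\ f1 != f2).
Proof.
move=> hn hs.
have := Inv_at eps (leqnn (size s)); rewrite hs.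
rewrite /e /mu_prime /mu.
case: (bmstate_at eps s n) => m0 mp jp dp /=.
move=> [/= hmu Wmu hdp hdeg hmp0 hmp1 hmin].
rewrite hs in hmp0 hmp1 Wmu.
rewrite e_ofE.
set L := pdeg m0 in hdeg hmp0 hmp1 hmin *.
have key : forall g : {poly D}, (g = 0 \/ ((pdeg g)%:Z <= - (n.+1%:Z - (2 * L)%N%:Z))) ->
     in_Min s (m0 + g * mp).
  move=> g hg.
  have hgb : g = 0 \/ (g != 0 /\ (pdeg g + n.+1 <= 2 * L)%N).
    case: hg => [->|hg]; first by left.
    case: (eqVneq g 0) => hg0; first by left.
    by right; split => //; move: hg; rewrite opprB lerBrDr -PoszD lez_nat.
  have hsz : (size (- (g * mp)) <= pdeg m0)%N.
    rewrite size_polyN; case: hgb => [->|[hg0 hgl]]; first by rewrite mul0r size_poly0.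
    apply: leq_trans (size_polyMleq _ _) _.
    rewrite (size_pdeg hg0) addSn /=.
    apply: leq_trans (leq_add (leqnn _) (size_pdeg_le mp)) _.
    rewrite -/L; nlia.
  have [hnz hdg] := pdeg_sub hmu hsz.
  rewrite opprK -/L in hnz hdg.
  have hC : forall m, (L <= m)%N -> (m < n)%N -> Cf s (g * mp) m = 0.
    move=> m h1 h2; case: hgb => [->|[hg0 hgl]]; first by rewrite mul0r /Cf mul0r coef0.
    rewrite Cf_mul big1 // => c _; case: (leqP c (pdeg g)) => hc.
    - by rewrite hmp0 ?mulr0 //; nlia.
    - by rewrite coef_pdeg ?mul0r.
  split => //; split.
    apply: ann_of_W => m; rewrite hdg hs => h1 h2.
    by rewrite Cf_add Wmu ?add0r ?hC //; nlia.
  move=> g' hg' /(W_of_ann hg'); rewrite hs hdg => hW; exact: hmin.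
split => // he.
have hL : (n.+1 <= 2 * L)%N by move: he; rewrite subr_le0 lez_nat.
have hL0 : (0 < L)%N by nlia.
exists (m0 + 0 * mp), (m0 + 1 * mp); split; first by apply: key; left.
split; first by apply: key; right; rewrite /pdeg size_poly1 /= opprB subr_ge0 lez_nat; nlia.
rewrite mul0r mul1r addr0; apply/eqP => /(congr1 (fun p => p - m0)).
rewrite subrr addrC addKr => hmp.
have := hmp1 hL0; rewrite -hmp /Cf mul0r coef0 => hd.
by rewrite -hd eqxx in hdp.
Qed.
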